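(* Let $(G,\mathcal{B}_1,\mathcal{B}_2)$ be a Rota-Baxter system of groups with cocycle $\Phi$. For every $t\in G$, let $\Phi_t$ be the restriction of $\Phi$ to $G_t$. Then $\operatorname{Im}(\Phi_t)=\operatorname{Im}(\Phi)=G_{1_G}$ for every $t\in G$, and $\Phi_{1_G}:G_{1_G}\to G_{1_G}$ is a bijection.
   Context: A Rota-Baxter system of groups is a triple $(G,\mathcal{B}_1,\mathcal{B}_2)$ where $G$ is a group with identity $1_G$ and $\mathcal{B}_1,\mathcal{B}_2:G\to G$ are maps such that for all $a,b\in G$: $\mathcal{B}_1(a)\mathcal{B}_1(b)=\mathcal{B}_1(\mathcal{B}_1(a)b\mathcal{B}_2(a))$ and $\mathcal{B}_2(b)\mathcal{B}_2(a)=\mathcal{B}_2(\mathcal{B}_1(a)b\mathcal{B}_2(a))$. Descendent operation: $a\circ b=\mathcal{B}_1(a)b\mathcal{B}_2(a)$; cocycle: $\Phi(a)=\mathcal{B}_1(a)\mathcal{B}_2(a)$. For $t\in G$: $e_t=\mathcal{B}_1(t)^{-1}t\mathcal{B}_2(t)^{-1}$ and $G_t=\{a\in G\mid a\circ e_t=a\}$. *)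

(* Defs.v *)
From HB Require Import structures.
From mathcomp Require Import all_boot.
From mathcomp Require Import monoid.

Set Implicit Arguments.
Unset Strict Implicit.
Unset Printing Implicit Defensive.

Local Open Scope group_scope.

Section RBS.
Variable G : groupType.

Definition is_RBsystem (B1 B2 : G -> G) : Prop :=
  forall a b : G,
    B1 a * B1 b = B1 (B1 a * b * B2 a) /\
    B2 b * B2 a = B2 (B1 a * b * B2 a).

Definition rbs_circ (B1 B2 : G -> G) (a b : G) : G := B1 a * b * B2 a.

Definition rbs_Phi (B1 B2 : G -> G) (a : G) : G := B1 a * B2 a.

Definition rbs_e (B1 B2 : G -> G) (t : G) : G := (B1 t)^-1 * t * (B2 t)^-1.

Definition rbs_Gt (B1 B2 : G -> G) (t : G) : G -> Prop :=
  fun a => rbs_circ B1 B2 a (rbs_e B1 B2 t) = a.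

End RBS.

(* Main.v *)
Require Import Defs.
From HB Require Import structures.
From mathcomp Require Import all_boot.
From mathcomp Require Import monoid.

Local Open Scope group_scope.

Section Aux.
Variable G : groupType.
Variables B1 B2 : G -> G.
Hypothesis H : is_RBsystem B1 B2.
Notation c := (rbs_circ B1 B2).
Notation e := (rbs_e B1 B2).

Lemma circA a b x : c (c a b) x = c a (c b x).
Proof.
rewrite /rbs_circ -(proj1 (H a b)) -(proj2 (H a b)) !mulgA //.
Qed.

Lemma circ_solve a x : c a ((B1 a)^-1 * x * (B2 a)^-1) = x.
Proof. by rewrite /rbs_circ !mulgA mulgV mul1g mulgVK. Qed.

Lemma circ_e a : c a (e a) = a.
Proof. exact: circ_solve. Qed.

Lemma circ_inj a x y : c a x = c a y -> x = y.
Proof. by rewrite /rbs_circ => /mulIg /mulgI. Qed.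

Lemma B1e t : B1 (e t) = 1.
Proof.
have h := proj1 (H t (e t)).
change (B1 t * B1 (e t) = B1 (c t (e t))) in h.
rewrite circ_e in h.
by apply: (mulgI (B1 t)); rewrite h mulg1.
Qed.

Lemma B2e t : B2 (e t) = 1.
Proof.
have h := proj2 (H t (e t)).
change (B2 (e t) * B2 t = B2 (c t (e t))) in h.
rewrite circ_e in h.
by apply: (mulIg (B2 t)); rewrite h mul1g.
Qed.

Lemma e_left t x : c (e t) x = x.
Proof. by rewrite /rbs_circ B1e B2e mul1g mulg1. Qed.

Lemma Gt_iff t a : rbs_Gt B1 B2 t a <-> e a = e t.
Proof.
rewrite /rbs_Gt; split.
  by move=> h; apply: (circ_inj a); rewrite h circ_e.
by move=> <-; apply: circ_e.
Qed.

Lemma ee t : e (e t) = e t.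
Proof. by apply/Gt_iff; rewrite /rbs_Gt e_left. Qed.

Lemma e_circ a b : e (c a b) = e b.
Proof.
apply/Gt_iff; rewrite /rbs_Gt circA.
by have -> : c b (e b) = b by exact: circ_e.
Qed.

Lemma Phi_circ a : rbs_Phi B1 B2 a = c a 1.
Proof. by rewrite /rbs_Phi /rbs_circ mulg1. Qed.

Definition dd := (B1 1)^-1 * e 1 * (B2 1)^-1.

Lemma circ1d : c 1 dd = e 1.
Proof. exact: circ_solve. Qed.

Lemma dd_e1 : c dd (e 1) = dd.
Proof.
have : e dd = e 1 by rewrite -(e_circ 1 dd) circ1d ee.
by move=> <-; apply: circ_e.
Qed.

Lemma circd1 : c dd 1 = e 1.
Proof.
set d' := (B1 dd)^-1 * e 1 * (B2 dd)^-1.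
have hd : c dd d' = e 1 by exact: circ_solve.
have h1 : c 1 (e 1) = 1 by exact: circ_e.
transitivity (c dd (c 1 (c dd d'))); first by rewrite hd h1.
by rewrite -(circA 1 dd d') circ1d -circA dd_e1.
Qed.

Lemma Phi_G1 a : rbs_Gt B1 B2 1 (rbs_Phi B1 B2 a).
Proof. by apply/Gt_iff; rewrite Phi_circ e_circ. Qed.

Lemma surj t y : rbs_Gt B1 B2 1 y ->
  rbs_Gt B1 B2 t (c (c y dd) (e t)) /\
  rbs_Phi B1 B2 (c (c y dd) (e t)) = y.
Proof.
move=> hy; split.
  by rewrite /rbs_Gt circA e_left.
by rewrite Phi_circ circA e_left circA circd1.
Qed.

End Aux.
Arguments surj {G B1 B2} H t y.
Arguments Phi_G1 {G B1 B2} H a.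
Arguments circA {G B1 B2} H a b x.

Theorem proposition4p4 (G : groupType) (B1 B2 : G -> G) :
  is_RBsystem B1 B2 ->
  (* Im(Phi_t) = Im(Phi) for every t *)
  (forall (t y : G),
     (exists a : G, rbs_Gt B1 B2 t a /\ rbs_Phi B1 B2 a = y) <->
     (exists a : G, rbs_Phi B1 B2 a = y)) /\
  (* Im(Phi) = G_{1} *)
  (forall y : G, (exists a : G, rbs_Phi B1 B2 a = y) <-> rbs_Gt B1 B2 1 y) /\
  (* Phi_{1} : G_{1} -> G_{1} is a bijection *)
  ((forall a : G, rbs_Gt B1 B2 1 a -> rbs_Gt B1 B2 1 (rbs_Phi B1 B2 a)) /\
   (forall a b : G, rbs_Gt B1 B2 1 a -> rbs_Gt B1 B2 1 b ->
      rbs_Phi B1 B2 a = rbs_Phi B1 B2 b -> a = b) /\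
   (forall y : G, rbs_Gt B1 B2 1 y ->
      exists a : G, rbs_Gt B1 B2 1 a /\ rbs_Phi B1 B2 a = y)).
Proof.
move=> H; split; [|split; [|split; [|split]]].
- move=> t y; split; first by case=> a [_ h]; exists a.
  case=> a <-; eexists; exact: (surj H t _ (Phi_G1 H a)).
- move=> y; split; first by case=> a <-; exact: Phi_G1.
  move=> hy; eexists; exact: (proj2 (surj H 1 _ hy)).
- by move=> a _; exact: Phi_G1.
- move=> a b ha hb; rewrite !Phi_circ => hab.
  rewrite -ha -circ1d -(circA H) hab (circA H) circ1d; exact: hb.
- by move=> y hy; eexists; exact: (surj H 1 _ hy).
Qed.
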